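(* Let $T$ be a nonempty Hausdorff compact topological space, $\Omega$ a nonempty open subset of $\mathbb{R}^p$, and $h:\mathbb{R}^p\times T\to\mathbb{R}$, $f:\mathbb{R}^p\to\mathbb{R}$ functions. Assume that $\hat{x}\in\Omega$ is an optimal solution of the problem of maximizing $f(x)$ subject to $x\in\Omega$ and $h(x,t)\ge0$ for all $t\in T$, and that: (a) $T(\hat{x}):=\{t\in T:h(\hat{x},t)=0\}\neq\emptyset$; (b) $f$ is Gateaux differentiable at $\hat{x}$ and the family $(h(\cdot,t))_{t\in T}$ is equi-Gateaux differentiable at $\hat{x}$; (c) the family $(h(\cdot,t))_{t\in T\setminus T(\hat{x})}$ is equi-lower semicontinuous at $\hat{x}$; (d) the maps $t\mapsto h(\hat{x},t)$ and $t\mapsto\nabla_x h(\hat{x},t)$ are continuous. Then there exist $\lambda_i\ge0$ and $t_i\in T(\hat{x})$, $i=0,\dots,k$, with $k\le p$ and $\sum_{i=0}^k\lambda_i=1$, such that $$\lambda_0 d_G f(\hat{x})+\sum_{i=1}^k\lambda_i\nabla_x h(\hat{x},t_i)=0.$$ If moreover $0\notin\operatorname{conv}\{\nabla_x h(\hat{x},t):t\in T(\hat{x})\}$, then $\lambda_0\neq0$.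
   Context: $\nabla_x h(\hat x,t)$ denotes the Gateaux differential of $h(\cdot,t)$ at $\hat x$. A function $\phi$ is Gateaux differentiable at $x$ if there is a linear functional $d_G\phi(x)$ with $\lim_{t\searrow0}(\phi(x+tv)-\phi(x))/t=\langle d_G\phi(x),v\rangle$ for all $v$. A family $C$ of functions is equi-Gateaux differentiable at $x$ if each member is Gateaux differentiable at $x$ and for every $v$, $\lim_{s\searrow0}\sup_{\phi\in C}|(\phi(x+sv)-\phi(x)-s\langle d_G\phi(x),v\rangle)/s|=0$; it is equi-lower semicontinuous at $x$ if for every $\varepsilon>0$ there is an open neighbourhood $O$ of $x$ with $\phi(y)-\phi(x)>-\varepsilon$ for all $y\in O$ and all $\phi$ in the family. *)

(* Defs.v *)
From HB Require Import structures.
From mathcomp Require Import all_boot all_order all_algebra.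
From mathcomp Require Import all_classical all_reals all_analysis.
Set Implicit Arguments. Unset Strict Implicit. Unset Printing Implicit Defensive.
Import Order.TTheory GRing.Theory Num.Theory.
Import numFieldNormedType.Exports.
Local Open Scope classical_set_scope.
Local Open Scope ring_scope.

(* R^p is represented by row vectors 'rV[R]_p; linear functionals on R^p are
   identified with vectors through the standard pairing dotv. *)
Definition dotv (R : realType) (p : nat) (d v : 'rV[R]_p) : R :=
  \sum_(i < p) d ord0 i * v ord0 i.

Definition gateaux_diff (R : realType) (p : nat) (phi : 'rV[R]_p -> R)
  (x d : 'rV[R]_p) : Prop :=
  forall v : 'rV[R]_p,
    (fun s : R => (phi (x + s *: v) - phi x) / s) @ 0^'+ --> dotv d v.

Definition equi_gateaux (R : realType) (p : nat) (T : Type)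
  (phi : T -> 'rV[R]_p -> R) (x : 'rV[R]_p) (dphi : T -> 'rV[R]_p) : Prop :=
  (forall t, gateaux_diff (phi t) x (dphi t)) /\
  forall v : 'rV[R]_p, forall eps : R, 0 < eps ->
    exists2 delta : R, 0 < delta &
      forall s : R, 0 < s < delta -> forall t : T,
        `|(phi t (x + s *: v) - phi t x - s * dotv (dphi t) v) / s| <= eps.

Definition equi_lsc (R : realType) (p : nat) (T : Type) (A : set T)
  (phi : T -> 'rV[R]_p -> R) (x : 'rV[R]_p) : Prop :=
  forall eps : R, 0 < eps ->
    exists O : set 'rV[R]_p, [/\ open O, O x &
      forall y, O y -> forall t, A t -> phi t y - phi t x > - eps].

Definition in_conv (R : realType) (p : nat) (S : set 'rV[R]_p) (z : 'rV[R]_p)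
  : Prop :=
  exists n : nat, exists mu : 'I_n -> R, exists y : 'I_n -> 'rV[R]_p,
    [/\ forall i, 0 <= mu i, \sum_(i < n) mu i = 1, forall i, S (y i)
      & z = \sum_(i < n) mu i *: y i].

(* Main.v *)
Require Import Defs.
From HB Require Import structures.
From mathcomp Require Import all_boot all_order all_algebra.
From mathcomp Require Import all_classical all_reals all_analysis.
From mathcomp Require Import ring lra.
Import Order.TTheory GRing.Theory Num.Theory.
Import numFieldNormedType.Exports.
Local Open Scope classical_set_scope.
Local Open Scope ring_scope.
Lemma dep_exists (R : realType) n (y : 'I_n.+2 -> 'rV[R]_n) :
  exists d : 'I_n.+2 -> R, (exists i, d i != 0) /\
    \sum_i d i *: y i = 0 /\ \sum_i d i = 0.
Proof.
pose Y := \matrix_(i, k) y i ord0 k : 'M[R]_(n.+2, n).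
pose M := row_mx (const_mx 1 : 'M[R]_(n.+2, 1)) Y.
have K0 : kermx M != 0.
  rewrite -mxrank_eq0 mxrank_ker subn_eq0 -ltnNge.
  exact: (leq_ltn_trans (rank_leq_col M)).
have [i Hi] : exists i, row i (kermx M) != 0.
  apply/existsP; move: K0; apply: contraR; rewrite negb_exists => /forallP H.
  apply/eqP/matrixP => a b; have := H a; rewrite negbK => /eqP/rowP/(_ b).
  by rewrite !mxE.
have hK : row i (kermx M) *m M = 0 by rewrite -row_mul mulmx_ker row0.
move: hK; rewrite mul_mx_row => /eqP; rewrite row_mx_eq0 => /andP [/eqP h1 /eqP h2].
exists (fun j => kermx M i j); split; [|split].
- apply/existsP; move: Hi; apply: contraR => /existsPn H; apply/eqP/rowP => j.
  by have := H j; rewrite negbK !mxE => /eqP.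
- apply/rowP => k; move/rowP: h2 => /(_ k); rewrite !mxE => h2.
  rewrite summxE; apply: etrans h2; apply: eq_bigr => j _; rewrite !mxE.
  by [].
- move/rowP: h1 => /(_ ord0); rewrite !mxE => h1; apply: etrans h1.
  by apply: eq_bigr => j _; rewrite !mxE mulr1.
Qed.

Lemma carath (R : realType) n (c : 'I_n.+2 -> R) (y : 'I_n.+2 -> 'rV[R]_n) :
  (forall i, 0 <= c i) -> \sum_i c i = 1 ->
  exists j : 'I_n.+1, exists c' : 'I_n.+1 -> R,
    [/\ forall i, 0 <= c' i, \sum_i c' i = 1 &
        \sum_i c i *: y i = \sum_i c' i *: y (lift (lift ord0 j) i)].
Proof.
move=> c0 c1.
have [e [[i0 He0] [Hey [Hes He0le]]]] : exists e : 'I_n.+2 -> R,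
   (exists i, e i != 0) /\ \sum_i e i *: y i = 0 /\ \sum_i e i = 0 /\ e ord0 <= 0.
  have [d [[i Hi] [Hdy Hds]]] := @dep_exists _ _ y.
  case: (lerP (d ord0) 0) => H; first by exists d; split; [exists i|].
  exists (fun i => - d i); split; first by exists i; rewrite oppr_eq0.
  split; first by under eq_bigr do rewrite scaleNr; rewrite sumrN Hdy oppr0.
  by rewrite sumrN Hds oppr0 lerNl oppr0 ltW.
have [j0 Hj0] : exists j, (j != ord0) && (0 < e j).
  apply/existsP; apply: contraT; rewrite negb_exists => /forallP H.
  have Hle : forall i, e i <= 0.
    move=> i; have := H i; case: eqP => [-> //|_ /=]; by rewrite -leNgt.
  have : forall i, true -> 0 <= - e i by move=> i _; rewrite oppr_ge0.
  move/psumr_eq0P; rewrite sumrN Hes oppr0 => /(_ erefl i0 erefl) /eqP.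
  by rewrite oppr_eq0 (negbTE He0).
case: (@arg_minP _ _ _ j0 (fun j => (j != ord0) && (0 < e j)) (fun i => c i / e i) Hj0).
move=> jm /andP [jm0 ejm] Hmin.
pose s := c jm / e jm.
have s0 : 0 <= s by rewrite /s divr_ge0 // ltW.
pose c' i := c i - s * e i.
have c'0 : forall i, 0 <= c' i.
  move=> i; rewrite /c' subr_ge0.
  case: (boolP ((i != ord0) && (0 < e i))) => Pi.
    have := Hmin i Pi; rewrite -/s => Hs.
    case/andP: Pi => _ ei; by rewrite -ler_pdivlMr.
  have : e i <= 0.
    move: Pi; case: eqP => [-> //|_ /=]; by rewrite -leNgt.
  move=> ei; apply: le_trans (c0 i); by rewrite mulr_ge0_le0.
have c'jm : c' jm = 0 by rewrite /c' /s divfK ?subrr // gt_eqF.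
have sc' : \sum_i c' i = 1.
  by rewrite /c' sumrB -mulr_sumr Hes mulr0 subr0.
have sy : \sum_i c' i *: y i = \sum_i c i *: y i.
  rewrite /c'; under eq_bigr do rewrite scalerBl -scalerA.
  by rewrite sumrB -scaler_sumr Hey scaler0 subr0.
case: (unliftP ord0 jm) => [j Ej|Ej]; last by rewrite Ej eqxx in jm0.
exists j, (fun i => c' (lift jm i)); split.
- by move=> i; exact: c'0.
- by move: sc'; rewrite (bigD1_ord jm) //= c'jm add0r.
- by rewrite -sy (bigD1_ord jm) //= c'jm scale0r add0r -Ej.
Qed.

Lemma dotvC (R : realType) p (u v : 'rV[R]_p) : dotv u v = dotv v u.
Proof. by rewrite /dotv; apply: eq_bigr => i _; rewrite mulrC. Qed.

Lemma dotv_exp (R : realType) p (z u : 'rV[R]_p) (s : R) :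
  dotv (z + s *: u) (z + s *: u) = dotv z z + 2 * s * dotv z u + s ^+ 2 * dotv u u.
Proof.
rewrite /dotv !mulr_sumr -!big_split /=; apply: eq_bigr => i _; rewrite !mxE.
ring.
Qed.

Lemma dotv_ge0 (R : realType) p (z : 'rV[R]_p) : 0 <= dotv z z.
Proof. by rewrite /dotv sumr_ge0 // => i _; rewrite -expr2 sqr_ge0. Qed.

Lemma dotv_eq0 (R : realType) p (z : 'rV[R]_p) : dotv z z = 0 -> z = 0.
Proof.
move=> /eqP; rewrite /dotv psumr_eq0; last by move=> i _; rewrite -expr2 sqr_ge0.
move=> /allP H; apply/rowP => i; rewrite mxE.
have := H i (mem_index_enum i); rewrite /= mulf_eq0 orbb => /eqP ->.
done.
Qed.

Lemma real_key (R : realType) (a b : R) : 0 <= b ->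
  (forall s, 0 < s < 1 -> 0 <= 2 * s * a + s ^+ 2 * b) -> 0 <= a.
Proof.
move=> b0 H; rewrite leNgt; apply/negP => a0.
pose s := - a / (b - a + 1).
have ba : 0 < b - a + 1 by lra.
have hs : s * (b - a + 1) = - a by rewrite /s divfK // gt_eqF.
have s0 : 0 < s by rewrite /s divr_gt0 // oppr_gt0.
have s1 : s < 1 by rewrite /s ltr_pdivrMr // mul1r; lra.
have := H s; rewrite s0 s1 => /(_ erefl).
have -> : 2 * s * a + s ^+ 2 * b = s * (a * (1 + s) - s).
  rewrite expr2; have : s * b = s * a - a - s by lra.
  move=> e; transitivity (s * (2 * a + s * b)); first ring.
  by rewrite e; ring.
rewrite pmulr_rge0 //; nra.
Qed.

Lemma le1 (R : realType) n (c : 'I_n -> R) :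
  (forall i, 0 <= c i) -> \sum_i c i = 1 -> forall i, c i <= 1.
Proof.
move=> c0 c1 i; rewrite -c1 (bigD1 i) //= lerDl sumr_ge0 //.
Qed.

Lemma cont_fst (U V : topologicalType) : continuous (fun x : U * V => x.1).
Proof. by move=> [a b]; exact: cvg_fst. Qed.
Lemma cont_snd (U V : topologicalType) : continuous (fun x : U * V => x.2).
Proof. by move=> [a b]; exact: cvg_snd. Qed.

Lemma cont_sum (R : realType) (X : topologicalType) n (F : 'I_n -> X -> R) :
  (forall i, continuous (F i)) -> continuous (fun x => \sum_i F i x).
Proof.
elim: n F => [|n IH] F HF.
  rewrite (_ : (fun x => _) = (fun=> 0)); first exact: cst_continuous.
  by apply/funext => x; rewrite big_ord0.
rewrite (_ : (fun x => _) = (fun x => F ord0 x + \sum_(i < n) F (lift ord0 i) x)).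
  move=> x; apply: cvgD; first exact: HF.
  exact: (IH (fun i => F (lift ord0 i))).
by apply/funext => x; rewrite big_ord_recl.
Qed.

Lemma cont_mul (R : realType) (X : topologicalType) (F G : X -> R) :
  continuous F -> continuous G -> continuous (fun x => F x * G x).
Proof. by move=> cF cG x; apply: cvgM; [exact: cF|exact: cG]. Qed.

Lemma cont_coord (R : realType) (X : topologicalType) p (F : X -> 'rV[R]_p) i :
  continuous F -> continuous (fun x => F x ord0 i).
Proof.
move=> cF x; exact: (continuous_comp (cF x) (@coord_continuous _ _ _ ord0 i (F x))).
Qed.

Lemma cont_dotv (R : realType) (X : topologicalType) p (F : X -> 'rV[R]_p) v :
  continuous F -> continuous (fun x => dotv (F x) v).
Proof.
move=> cF; rewrite /dotv; apply: cont_sum => i; apply: cont_mul.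
  exact: cont_coord.
exact: cst_continuous.
Qed.


Lemma cont_comp (X Y W : topologicalType) (f : X -> Y) (g : Y -> W) :
  continuous f -> continuous g -> continuous (fun x => g (f x)).
Proof. by move=> cf cg x; exact: (continuous_comp (cf x) (cg (f x))). Qed.

Lemma dotvBr (R : realType) p (z w u : 'rV[R]_p) :
  dotv z (w - u) = dotv z w - dotv z u.
Proof. by rewrite /dotv -sumrB; apply: eq_bigr => i _; rewrite !mxE mulrBr. Qed.

Definition gg (R : realType) (p n : nat) (T : Type) (df : 'rV[R]_p)
  (dh : T -> 'rV[R]_p) (i : 'I_n) (t : T) : 'rV[R]_p :=
  if val i == 0%N then df else dh t.
Arguments gg {R p n T}.

Section MainComb.
Import ArrowAsProduct.

Lemma main_comb (R : realType) (p : nat) (T : topologicalType) (Z : set T)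
  (df : 'rV[R]_p) (dh : T -> 'rV[R]_p) :
  compact Z -> Z !=set0 -> continuous dh ->
  (forall v, 0 < dotv df v -> ~ (forall t, Z t -> 0 < dotv (dh t) v)) ->
  exists lam : 'I_p.+1 -> R, exists tau : 'I_p.+1 -> T,
   [/\ forall i, 0 <= lam i, forall i, Z (tau i), \sum_i lam i = 1
     & \sum_i lam i *: gg df dh i (tau i) = 0].
Proof.
move=> cZ [t0 Zt0] cdh ND.
pose Δ := [set v : 'rV[R]_p.+1 | forall i, (`[(0:R), 1]%classic : set R) (v ord0 i)]
   `&` [set v | \sum_i v ord0 i = 1].
have inΔ : forall v : 'rV[R]_p.+1, (forall i, 0 <= v ord0 i) -> \sum_i v ord0 i = 1 -> Δ v.
  move=> v v0 v1; split => //= i; rewrite in_itv /= v0 /=.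
  exact: (@le1 R _ (fun i => v ord0 i)).
have outΔ : forall v, Δ v -> (forall i, 0 <= v ord0 i) /\ \sum_i v ord0 i = 1.
  move=> v [H1 H2]; split => // i; have := H1 i; rewrite /= in_itv /=.
  by case/andP.
pose Zs := [set f : 'I_p.+1 -> T | forall i, Z (f i)].
pose A := Δ `*` Zs.
have cA : compact A.
  apply: (compact_setX _ (tychonoff (fun _ : 'I_p.+1 => cZ))).
  apply: compact_closedI.
    exact: (@rV_compact R p.+1 (fun _ => `[(0:R), 1]%classic) (fun _ => @segment_compact R 0 1)).
  have cs : continuous (fun v : 'rV[R]_p.+1 => \sum_i v ord0 i).
    by apply: cont_sum => i; exact: coord_continuous.
  by have := @preimage_closed _ R (fun v : 'rV[R]_p.+1 => \sum_i v ord0 i) [set x : R | x = 1] (fun v _ => cs v) (@closed_eq R 1).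
pose cz (x : 'rV[R]_p.+1 * ('I_p.+1 -> T)) :=
  \sum_i x.1 ord0 i *: gg df dh i (x.2 i).
pose F x := dotv (cz x) (cz x).
have cF : continuous F.
  have ck : forall k, continuous (fun x => cz x ord0 k).
    move=> k.
    rewrite (_ : (fun x => cz x ord0 k) = fun x =>
        \sum_i x.1 ord0 i * gg df dh i (x.2 i) ord0 k); last first.
      by apply/funext => x; rewrite /cz summxE; apply: eq_bigr => i _; rewrite mxE.
    apply: cont_sum => i; apply: cont_mul.
      exact: (cont_comp _ _ _ _ _ (cont_fst _ _) (@coord_continuous R 1 p.+1 ord0 i)).
    rewrite /gg; case: eqP => _; first exact: cst_continuous.
    apply: (cont_comp _ _ _ (fun x : _ * _ => x.2) (fun f : 'I_p.+1 -> T => dh (f i) ord0 k) (cont_snd _ _)).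
    apply: (cont_comp _ _ _ (fun f : 'I_p.+1 -> T => f i) (fun t => dh t ord0 k) (@proj_continuous _ (fun _ : 'I_p.+1 => T) i)).
    exact: cont_coord.
  by rewrite /F /dotv; apply: cont_sum => k; apply: cont_mul.
pose e0 : 'rV[R]_p.+1 := \row_i (if val i == 0%N then 1 else 0).
have A0 : A (e0, fun _ => t0).
  split => //=; apply: inΔ.
    by move=> i; rewrite mxE; case: ifP.
  rewrite big_ord_recl mxE eqxx big1 ?addr0 // => i _; by rewrite mxE.
have [xs xsA Hmin] := compact_EVT_min (ex_intro _ _ A0) cA (continuous_subspaceT cF).
move: xsA; rewrite inE => -[/outΔ [lam0 lam1] tauZ].
pose z := cz xs.
case: (eqVneq z 0) => [z0|zn0].
  by exists (fun i => xs.1 ord0 i), xs.2; split.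
exfalso.
have zz : 0 < dotv z z.
  rewrite lt_neqAle dotv_ge0 andbT eq_sym; apply/eqP => /dotv_eq0 H.
  by rewrite H eqxx in zn0.
have key : forall w, (forall s, 0 < s < 1 -> exists2 x', A x' & cz x' = z + s *: (w - z)) ->
    dotv z z <= dotv w z.
  move=> w Hw.
  suff : 0 <= dotv z (w - z) by rewrite dotvBr dotvC subr_ge0.
  apply: (real_key _ _ (dotv (w - z) (w - z))); first exact: dotv_ge0.
  move=> s Hs.
  have [x' x'A e] := Hw s Hs.
  have := Hmin x'; rewrite inE => /(_ x'A).
  rewrite /F e dotv_exp -/z. lra.
have Kdf : dotv z z <= dotv df z.
  apply: key => s /andP [s0 s1].
  exists ((\row_i ((1 - s) * xs.1 ord0 i + (if val i == 0%N then s else 0))), xs.2).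
    split => //=; apply: inΔ.
      move=> i; rewrite mxE; apply: addr_ge0.
        by apply: mulr_ge0; [lra|exact: lam0].
      by case: ifP => _; lra.
    rewrite (eq_bigr (fun i : 'I_p.+1 => (1 - s) * xs.1 ord0 i + (if val i == 0%N then s else 0))); last by move=> i _; rewrite mxE.
    rewrite big_split /= -mulr_sumr lam1 mulr1 big_ord_recl /= big1 ?addr0; first lra.
    by [].
  rewrite /cz /=.
  under eq_bigr do rewrite mxE scalerDl -scalerA.
  rewrite big_split /= -scaler_sumr.
  have -> : \sum_i xs.1 ord0 i *: gg df dh i (xs.2 i) = z by [].
  rewrite big_ord_recl /= big1 ?addr0; last by move=> i _; rewrite scale0r.
  rewrite /gg /= scalerBl scale1r scalerBr -addrA; congr (_ + _); rewrite addrC.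
  by [].
have Kdh : forall t, Z t -> dotv z z <= dotv (dh t) z.
  move=> t Zt; apply: key => s /andP [s0 s1].
  pose c : 'I_p.+2 -> R := fun i => if i == ord_max then s else (1 - s) * xs.1 ord0 (inord i).
  pose yt : 'I_p.+2 -> T := fun i => if i == ord_max then t else xs.2 (inord i).
  pose y := fun i => gg df dh i (yt i).
  have wm : forall i : 'I_p.+1, (widen_ord (leqnSn p.+1) i == ord_max) = false.
    by move=> i; apply/negbTE; rewrite -val_eqE /= neq_ltn ltn_ord.
  have c0 : forall i, 0 <= c i.
    move=> i; rewrite /c; case: eqP => _; first lra.
    by apply: mulr_ge0; [lra| exact: lam0].
  have c1 : \sum_i c i = 1.
    rewrite big_ord_recr /= /c eqxx.
    under eq_bigr => i _ do rewrite wm /= inord_val.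
    by rewrite -mulr_sumr lam1; lra.
  have cy : \sum_i c i *: y i = z + s *: (dh t - z).
    rewrite big_ord_recr /= /c /y /yt eqxx.
    under eq_bigr => i _ do rewrite wm /= inord_val -scalerA.
    rewrite -scaler_sumr.
    have -> : \sum_(i < p.+1) xs.1 ord0 i *: gg df dh (widen_ord (leqnSn p.+1) i) (xs.2 i) = z.
      by apply: eq_bigr.
    rewrite /gg /= scalerBl scale1r scalerBr -addrA; congr (_ + _); rewrite addrC.
    by [].
  have [j [c' [c'0 c'1 e]]] := @carath R p c y c0 c1.
  pose L := lift ord0 j.
  exists (\row_i c' i, fun i => yt (lift L i)).
    split => /=.
      apply: inΔ; first by move=> i; rewrite mxE; exact: c'0.
      by under eq_bigr do rewrite mxE; exact: c'1.
    by move=> i; rewrite /yt; case: eqP => _; [exact: Zt | exact: tauZ].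
  rewrite /cz /= -cy e; apply: eq_bigr => i _; rewrite mxE /y.
  congr (_ *: _); rewrite /gg.
  have -> : (val (lift L i) == 0%N) = (val i == 0%N).
    rewrite /= /bump /=; case: i => [[|m] Hm] //=; by rewrite addnS.
  by [].
apply: (ND z) => [|t Zt].
  exact: lt_le_trans zz Kdf.
exact: lt_le_trans zz (Kdh t Zt).
Qed.
End MainComb.

Lemma no_dir (R : realType) (p : nat) (T : topologicalType)
  (Omega : set 'rV[R]_p) (h : 'rV[R]_p -> T -> R) (f : 'rV[R]_p -> R)
  (xh df : 'rV[R]_p) (dh : T -> 'rV[R]_p) :
  compact [set: T] -> open Omega -> Omega xh -> (forall t, 0 <= h xh t) ->
  (forall x, Omega x -> (forall t, 0 <= h x t) -> f x <= f xh) ->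
  gateaux_diff f xh df -> equi_gateaux (fun t x => h x t) xh dh ->
  equi_lsc [set t | h xh t != 0] (fun t x => h x t) xh ->
  continuous (h xh) -> continuous dh ->
  forall v, 0 < dotv df v -> ~ (forall t, h xh t = 0 -> 0 < dotv (dh t) v).
Proof.
move=> cT oO Ox hpos opt gf [_ eg] el ch cdh v dfv Hact.
pose g t := dotv (dh t) v.
have cg : continuous g by exact: cont_dotv.
pose Z := [set t | h xh t = 0].
have cZ : compact Z.
  apply: (subclosed_compact _ cT) => //.
  have := (@preimage_closed _ _ (h xh) [set x | x = 0] (fun t _ => ch t) (@closed_eq R 0)).
  by [].
have [γ γ0 Hγ] : exists2 γ : R, 0 < γ & forall t, Z t -> γ <= g t.
  case: (pselect (Z !=set0)) => [Zn|Z0].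
    have [c cZ' Hc] := compact_EVT_min Zn cZ (continuous_subspaceT cg).
    exists (g c); first by apply: Hact; move: cZ'; rewrite inE.
    by move=> t Zt; apply: Hc; rewrite inE.
  by exists 1 => // t Zt; exfalso; apply: Z0; exists t.
pose W := [set t | γ / 2 < g t].
have oW : open W.
  by have := (@open_comp _ _ g [set x | γ / 2 < x] (fun t _ => cg t) (@open_gt R (γ / 2))).
pose C := ~` W.
have cC : compact C by apply: (subclosed_compact _ cT) => //; rewrite closedC.
have ZW : forall t, Z t -> W t.
  move=> t Zt; have := Hγ t Zt; rewrite /W /=; move=> H.
  by apply: lt_le_trans H; rewrite ltr_pdivrMr // ltr_pMr // ltr1n.
have [β β0 Hβ] : exists2 β : R, 0 < β & forall t, C t -> β <= h xh t.
  case: (pselect (C !=set0)) => [Cn|C0].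
    have [c cC' Hc] := compact_EVT_min Cn cC (continuous_subspaceT ch).
    exists (h xh c); last by move=> t Ct; apply: Hc; rewrite inE.
    move: cC'; rewrite inE => Cc; rewrite lt_neqAle hpos andbT eq_sym.
    by apply/eqP => /ZW.
  by exists 1 => // t Ct; exfalso; apply: C0; exists t.
have [δ δ0 Hδ] := eg v (γ / 4) (divr_gt0 γ0 (ltr0n _ 4)).
have [Ob [oO' Ox' HO]] := el β β0.
have Hq := cvgr_gt _ (gf v) _ dfv.
have cx : (fun s : R => xh + s *: v) @ 0^'+ --> xh.
  suff : (fun s : R => xh + s *: v) @ 0^'+ --> xh + 0 *: v by rewrite scale0r addr0.
  apply: cvg_at_right_filter; apply: cvgD; first exact: cvg_cst.
  by apply: cvgZr_tmp; exact: cvg_id.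
have nO : nbhs xh (Omega `&` Ob).
  by apply: open_nbhs_nbhs; split; [exact: openI|].
have Hx := cx _ nO.
have : \forall s \near 0^'+, [/\ 0 < s, s < δ,
   0 < (f (xh + s *: v) - f xh) / s & (Omega `&` Ob) (xh + s *: v)].
  near=> s; split.
  - by near: s; exact: nbhs_right_gt.
  - by near: s; exact: nbhs_right_lt.
  - by near: s; exact: Hq.
  - by near: s; exact: Hx.
case/filter_ex => s [s0 sδ qs [Os Os']].
have feas : forall t, 0 <= h (xh + s *: v) t.
  move=> t; case: (pselect (W t)) => Wt.
    have := Hδ s _ t; rewrite s0 sδ => /(_ erefl).
    rewrite ler_norml => /andP [H1 _].
    move: H1; rewrite ler_pdivlMr // => H1.
    have H2 := hpos t.
    have H3 : γ / 2 < g t by exact: Wt.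
    rewrite -/(g t) in H1.
    nra.
  have Ct : C t by exact: Wt.
  have nz : h xh t != 0 by apply/eqP => /ZW.
  have := HO _ Os' t nz; have := Hβ t Ct => /= H1 H2.
  lra.
have H1 := opt _ Os feas.
have := mulr_gt0 qs s0; rewrite divfK ?gt_eqF // => H2.
lra.
Unshelve. all: by end_near.
Qed.

Theorem corollary4p5 (R : realType) (p : nat) (T : topologicalType)
  (Omega : set 'rV[R]_p) (h : 'rV[R]_p -> T -> R) (f : 'rV[R]_p -> R)
  (xh : 'rV[R]_p) (df : 'rV[R]_p) (dh : T -> 'rV[R]_p) :
  hausdorff_space T -> compact [set: T] -> [set: T] !=set0 ->
  open Omega -> Omega !=set0 ->
  (* xh is an optimal solution of max f(x) s.t. x in Omega, h(x,t) >= 0 for all t *)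
  Omega xh -> (forall t, 0 <= h xh t) ->
  (forall x, Omega x -> (forall t, 0 <= h x t) -> f x <= f xh) ->
  (* (a) *)
  [set t | h xh t = 0] !=set0 ->
  (* (b) *)
  gateaux_diff f xh df ->
  equi_gateaux (fun t x => h x t) xh dh ->
  (* (c) *)
  equi_lsc [set t | h xh t != 0] (fun t x => h x t) xh ->
  (* (d) *)
  continuous (h xh) -> continuous dh ->
  exists k : nat, exists lam : 'I_k.+1 -> R, exists ts : 'I_k.+1 -> T,
    [/\ (k <= p)%N, (forall i, 0 <= lam i) /\ (forall i, h xh (ts i) = 0),
        \sum_(i < k.+1) lam i = 1,
        lam ord0 *: df + \sum_(i < k) lam (lift ord0 i) *: dh (ts (lift ord0 i)) = 0
      & ~ in_conv [set dh t | t in [set t | h xh t = 0]] 0 -> lam ord0 != 0].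
Proof.
move=> _ cT _ oO _ Ox hpos opt Zn gf eg el ch cdh.
pose Z := [set t | h xh t = 0].
have cZ : compact Z.
  apply: (subclosed_compact _ cT) => //.
  by have := (@preimage_closed _ _ (h xh) [set x | x = 0] (fun t _ => ch t) (@closed_eq R 0)).
have ND := @no_dir R p T Omega h f xh df dh cT oO Ox hpos opt gf eg el ch cdh.
have [lam [tau [l0 tZ l1 e]]] := @main_comb R p T Z df dh cZ Zn cdh ND.
have gl : forall (i : 'I_p) t, gg df dh (lift ord0 i) t = dh t.
  by move=> i t; rewrite /gg /=.
move: e; rewrite big_ord_recl; under eq_bigr do rewrite gl.
rewrite /gg /= => e.
exists p, lam, tau; split => //.
move=> Hnc; apply/eqP => l00; apply: Hnc.
exists p, (fun i => lam (lift ord0 i)), (fun i => dh (tau (lift ord0 i))); split.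
- by move=> i; exact: l0.
- by move: l1; rewrite big_ord_recl l00 add0r.
- by move=> i; exists (tau (lift ord0 i)) => //; exact: tZ.
- by move: e; rewrite l00 scale0r add0r => ->.
Qed.
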